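(* Let $k\ge 2$ be an integer, $1/2<q<1$. Let $y^*$ be a point with all coordinates strictly positive at which $P$ attains its maximum over $\Delta_k$, and suppose $y^*\neq(1/k,\dots,1/k)$, so that (as shown previously) its coordinates take exactly two values $a<1-q<b$. Then exactly one coordinate of $y^*$ equals $b$ (and the remaining $k-1$ coordinates equal $a$).
   Context: $\Delta_k=\{y\in\mathbb R^k: y_i\ge 0,\ \sum_i y_i=1\}$. For $y\in\Delta_k$, $P(y)=\sum_{i=1}^k y_i^q\prod_{j\ne i}(1-y_j)^q$. *)

(* Defs.v *)
From HB Require Import structures.
From mathcomp Require Import all_boot all_order all_algebra.
From mathcomp Require Import all_classical all_reals all_analysis.
Set Implicit Arguments. Unset Strict Implicit. Unset Printing Implicit Defensive.
Import Order.TTheory GRing.Theory Num.Theory.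
Local Open Scope ring_scope.

Definition in_simplex (R : realType) (k : nat) (y : 'I_k -> R) : Prop :=
  (forall i, 0 <= y i) /\ \sum_(i < k) y i = 1.

Definition P_simplex (R : realType) (k : nat) (q : R) (y : 'I_k -> R) : R :=
  \sum_(i < k) (y i `^ q * \prod_(j < k | j != i) (1 - y j) `^ q).

(* Main.v *)
Require Import Defs.
From HB Require Import structures.
From mathcomp Require Import all_boot all_order all_algebra.
From mathcomp Require Import all_classical all_reals all_analysis.
From mathcomp Require Import ring lra.
Import Order.TTheory GRing.Theory Num.Theory.
Import numFieldNormedType.Exports.
Set Implicit Arguments. Unset Strict Implicit.
Local Open Scope ring_scope.
Local Open Scope classical_set_scope.

Section Helpers.
Variable R : realType.

Definition pw (r al be t : R) := (al + be * t) `^ r.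

Lemma is_derive_aff (al be t : R) : is_derive t (1:R) (fun s : R => al + be * s) be.
Proof.
have H : is_derive t 1 (cst al + be *: (@idfun R)) (0 + be *: 1).
  by apply: is_deriveD.
by rewrite add0r scaler1 in H.
Qed.

Lemma is_derive_pw (r al be t : R) : 0 < al + be * t ->
  is_derive t (1:R) (pw r al be) (r * pw (r-1) al be t * be).
Proof.
move=> pos.
have ha := is_derive_aff al be t.
have hp := @is_derive1_powR R r (al + be * t) pos.
have e : pw r al be = (fun x : R => x `^ r) \o (fun s : R => al + be * s) by [].
have d1 : derivable (fun s : R => al + be * s) t 1 by case: ha.
have d2 : derivable (fun x : R => x `^ r) (al + be * t) 1 by case: hp.
apply: DeriveDef.
  rewrite e; apply/derivable1_diffP; apply: differentiable_comp;
  by apply/derivable1_diffP.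
rewrite -derive1E e derive1_comp // !derive1E !derive_val.
by rewrite /pw.
Qed.

Definition isd (f : R -> R) (t df : R) : Prop := is_derive t (1:R) f df.

Lemma isd_pw (r al be t : R) : 0 < al + be * t ->
  isd (pw r al be) t (r * pw (r-1) al be t * be).
Proof. exact: is_derive_pw. Qed.

Lemma isdM (f g : R -> R) (t df dg : R) : isd f t df -> isd g t dg ->
  isd (fun s => f s * g s) t (f t * dg + g t * df).
Proof. rewrite /isd => h1 h2; have := is_deriveM h1 h2; by rewrite /GRing.scale /=. Qed.

Lemma isdD (f g : R -> R) (t df dg : R) : isd f t df -> isd g t dg ->
  isd (fun s => f s + g s) t (df + dg).
Proof. rewrite /isd => h1 h2; exact: is_deriveD h1 h2. Qed.

Lemma isdC (c t : R) : isd (fun _ : R => c) t 0.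
Proof. exact: is_derive_cst. Qed.

Lemma isd_eq (f : R -> R) (t df df' : R) : isd f t df -> df = df' -> isd f t df'.
Proof. by move=> h <-. Qed.

Lemma isd_derivable (f : R -> R) (t df : R) : isd f t df -> derivable f t 1.
Proof. by case. Qed.

Lemma first_order (f : R -> R) (del d : R) : 0 < del ->
  (forall t : R, -del < t < del -> derivable f t (1:R)) -> is_derive (0:R) (1:R) f d ->
  (forall t : R, -del < t < del -> f t <= f 0) -> d = 0.
Proof.
move=> dp fd fdd fmax.
have H0 : is_derive (0:R) (1:R) f 0.
  apply: (@derive1_at_max R f (-del) del 0).
  - by rewrite ge0_cp // ltW.
  - by move=> t; rewrite in_itv /= => /fd.
  - by rewrite in_itv /= oppr_lt0 dp.
  - by move=> t; rewrite in_itv /= => /fmax.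
have e1 := @derive_val _ _ _ _ _ _ _ fdd.
have e2 := @derive_val _ _ _ _ _ _ _ H0.
by rewrite -e1 e2.
Qed.

Lemma second_order (f df : R -> R) (del d : R) : 0 < del ->
  (forall t : R, -del < t < del -> is_derive t (1:R) f (df t)) -> is_derive (0:R) (1:R) df d ->
  (forall t : R, -del < t < del -> f t <= f 0) -> d <= 0.
Proof.
move=> dp fd dfd fmax.
have df0 : df 0 = 0.
  have h0 : -del < 0 < del by rewrite oppr_lt0 dp.
  apply: (@first_order f del (df 0) dp _ (fd 0 h0) fmax).
  by move=> t /fd [].
rewrite leNgt; apply/negP => d0.
case: dfd => dv dval.
have cvd : (fun h : R => h^-1 *: ((df \o shift 0) (h *: 1) - df 0)) @ 0^' --> d.
  by rewrite -dval; exact: dv.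
have HN := cvgr_gt d cvd 0 d0.
have [e /= e0 He] : nbhs_ball (0:R) (fun h : R => h != 0 -> 0 < h^-1 *: ((df \o shift 0) (h *: 1) - df 0)).
  by apply/nbhs_ballP; exact: HN.
have [eps eps0 Heps] : exists2 e : R, 0 < e & forall h : R, 0 < h < e -> 0 < df h.
  exists e => // h /andP[h0 he].
  have := He h; rewrite /ball /= sub0r normrN gtr0_norm // => /(_ he).
  rewrite gt_eqF // => /(_ isT).
  by rewrite [_%:A]mulr1 addr0 df0 subr0 pmulr_rgt0 // invr_gt0.
set h0 := Num.min eps del / 2.
have h0p : 0 < h0 by rewrite divr_gt0 // lt_min eps0 dp.
have mp : 0 < Num.min eps del by rewrite lt_min eps0 dp.
have hm : h0 < Num.min eps del by rewrite /h0 ltr_pdivrMr // ltr_pMr // ltr1n.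
have h0e : h0 < eps by rewrite (lt_le_trans hm) // ge_min lexx.
have h0d : h0 < del by rewrite (lt_le_trans hm) // ge_min lexx orbT.
have inI x : 0 <= x <= h0 -> - del < x < del.
  move=> /andP[x0 xh]; rewrite (lt_le_trans _ x0) ?oppr_lt0 //=.
  exact: (le_lt_trans xh).
have [c cI Hc] : exists2 c, c \in `]0, h0[%R & f h0 - f 0 = df c * (h0 - 0).
  apply: MVT => //.
    move=> x; rewrite in_itv /= => /andP[x0 xh]; apply: fd; apply: inI.
    by rewrite !ltW.
  apply: derivable_within_continuous => x; rewrite in_itv /= => xI.
  by case: (fd x (inI x xI)).
move: cI; rewrite in_itv /= => /andP[c0 ch].
have dfc : 0 < df c by apply: Heps; rewrite c0 (lt_trans ch h0e).
have : f h0 <= f 0 by apply: fmax; apply: inI; rewrite lexx ltW.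
by rewrite -subr_le0 Hc subr0 leNgt pmulr_rgt0 // h0p.
Qed.
Lemma big3 (T : Type) (idx : T) (op : Monoid.com_law idx) (k : nat) (F : 'I_k -> T)
  (i j1 j2 : 'I_k) : i != j1 -> i != j2 -> j1 != j2 ->
  \big[op/idx]_(l < k) F l =
  op (F i) (op (F j1) (op (F j2) (\big[op/idx]_(l < k | (l != i) && (l != j1) && (l != j2)) F l))).
Proof.
move=> h1 h2 h3.
rewrite (bigD1 i) //= (bigD1 j1) /=; last by rewrite eq_sym h1.
rewrite (bigD1 j2) /=; last by rewrite eq_sym h2 eq_sym h3.
by congr (op _ (op _ (op _ _))); apply: eq_bigl => l; rewrite andbA.
Qed.

Lemma sum3 (k : nat) (F : 'I_k -> R) (i j1 j2 : 'I_k) : i != j1 -> i != j2 -> j1 != j2 ->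
  \sum_(l < k) F l =
  F i + (F j1 + (F j2 + \sum_(l < k | (l != i) && (l != j1) && (l != j2)) F l)).
Proof. exact: big3. Qed.

Lemma prod3 (k : nat) (F : 'I_k -> R) (i j1 j2 : 'I_k) : i != j1 -> i != j2 -> j1 != j2 ->
  \prod_(l < k) F l =
  F i * (F j1 * (F j2 * \prod_(l < k | (l != i) && (l != j1) && (l != j2)) F l)).
Proof. exact: big3. Qed.

Lemma Pprod (k : nat) (q : R) (z : 'I_k -> R) : (forall l, z l < 1) ->
  P_simplex q z = (\prod_(l < k) (1 - z l) `^ q) * \sum_(l < k) (z l `^ q / (1 - z l) `^ q).
Proof.
move=> z1; rewrite /P_simplex mulr_sumr; apply: eq_bigr => l _.
rewrite [in RHS](bigD1 l) //=.
have ne : (1 - z l) `^ q != 0 by rewrite gt_eqF // powR_gt0 // subr_gt0.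
by field.
Qed.
Lemma pw0 (r al be : R) : pw r al be 0 = al `^ r.
Proof. by rewrite /pw mulr0 addr0. Qed.

Lemma powq1 (x r : R) : 0 < x -> x `^ (r - 1) = x `^ r / x.
Proof.
move=> x0; rewrite powRB; last by apply/implyP => _; rewrite gt_eqF.
by rewrite powRr1 // ltW.
Qed.

Lemma posaux (a b t : R) : 0 < a -> a < b -> b < 1/2 -> - a < t < a ->
  [/\ 0 < a + 1 * t, 0 < 1 - b + 1 * t, 0 < b + -1 * t, 0 < 1 - a + -1 * t &
     (0 < b + 1 * t /\ 0 < 1 - b + -1 * t)].
Proof. move=> a0 ab b12 /andP[t1 t2]; rewrite !mul1r !mulN1r; split; try split; lra. Qed.

End Helpers.

Ltac dstep := match goal with
 | |- isd (fun _ => ?c) _ _ => apply: isdC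
 | |- isd (fun _ => pw _ _ _ _) _ _ => apply: isd_pw
 | |- isd (pw _ _ _) _ _ => apply: isd_pw
 | |- isd (fun _ => _ + _) _ _ => apply: isdD
 | |- isd (fun _ => _ * _) _ _ => apply: isdM
 end.
Ltac dtac := repeat dstep.



Unset Implicit Arguments.
Local Close Scope classical_set_scope.
Local Open Scope ring_scope.

Theorem lemma4p4 (R : realType) (k : nat) (q : R) (y : 'I_k -> R) (a b : R) :
  (2 <= k)%N -> 1 / 2 < q -> q < 1 ->
  in_simplex y -> (forall i, 0 < y i) ->
  (forall z : 'I_k -> R, in_simplex z -> P_simplex q z <= P_simplex q y) ->
  (exists i, y i <> k%:R^-1) ->
  a < 1 - q -> 1 - q < b ->
  (forall i, y i = a \/ y i = b) -> (exists i, y i = a) -> (exists i, y i = b) ->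
  exists i, y i = b /\ (forall j, j != i -> y j = a).
Proof.
move=> k2 q12 q1 [y0 ysum] ypos ymax _ aq bq yab [i yi] [j1 yj1].
have [H|H] := boolP [forall l, (l != j1) ==> (y l == a)].
  exists j1; split => // l lj.
  by move/forallP: H => /(_ l); rewrite lj => /eqP.
exfalso.
have [j2 /andP[j2j1 yj2a]] : exists l, (l != j1) && (y l != a).
  move: H; rewrite negb_forall => /existsP[l]; rewrite negb_imply => Hl.
  by exists l.
have yj2 : y j2 = b by case: (yab j2) => // ya; rewrite ya eqxx in yj2a.
have ab : a < b by apply: lt_trans aq bq.
have h1 : i != j1 by apply/eqP => e; move: yj1; rewrite -e yi => e2; rewrite e2 ltxx in ab.
have h2 : i != j2 by apply/eqP => e; move: yj2; rewrite -e yi => e2; rewrite e2 ltxx in ab.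
have h3 : j1 != j2 by rewrite eq_sym.
have a0 : 0 < a by rewrite -yi.
have b0 : 0 < b by rewrite (lt_trans a0).
set O := fun l : 'I_k => (l != i) && (l != j1) && (l != j2).
have sumO : 0 <= \sum_(l < k | O l) y l by apply: sumr_ge0 => l _.
have ysum3 := ysum; rewrite (sum3 _ h1 h2 h3) yi yj1 yj2 in ysum3.
have b12 : b < 1 / 2 by lra.
have ylt1 l : y l < 1 by case: (yab l) => ->; lra.
have ca0 : 0 < 1 - a by lra.
have cb0 : 0 < 1 - b by lra.
have pa0 : 0 < a `^ q by apply: powR_gt0.
have pb0 : 0 < b `^ q by apply: powR_gt0.
have pca0 : 0 < (1 - a) `^ q by apply: powR_gt0.
have pcb0 : 0 < (1 - b) `^ q by apply: powR_gt0.
have q0 : 0 < q by lra.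
have ba : (b == a) = false by rewrite gt_eqF.
set al := \sum_(l < k | O l) ((y l == a)%:R : R).
set be := \sum_(l < k | O l) ((y l != a)%:R : R).
have al0 : 0 <= al by apply: sumr_ge0 => l _; rewrite ler0n.
have be0 : 0 <= be by apply: sumr_ge0 => l _; rewrite ler0n.
have Hsum : \sum_(l < k | O l) y l = al * a + be * b.
  rewrite /al /be !mulr_suml -big_split; apply: eq_bigr => l _.
  by case: (yab l) => ->; rewrite ?eqxx ?ba /=; ring.
have Hcon : (al + 1) * a + (be + 2) * b = 1 by rewrite Hsum in ysum3; lra.
have Hbe : be = (1 - (al + 1) * a) / b - 2.
  by apply: (mulIf (lt0r_neq0 b0)); rewrite mulrBl divfK ?lt0r_neq0 //; lra.
set C0 := \prod_(l < k | O l) (1 - y l) `^ q.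
set S := \sum_(l < k | O l) (y l `^ q / (1 - y l) `^ q).
have HS : S = al * (a `^ q / (1 - a) `^ q) + be * (b `^ q / (1 - b) `^ q).
  rewrite /S /al /be !mulr_suml -big_split; apply: eq_bigr => l _.
  by case: (yab l) => ->; rewrite ?eqxx ?ba /=; ring.
have C00 : 0 < C0 by apply: prodr_gt0 => l _; apply: powR_gt0; rewrite subr_gt0.
have decomp : forall z : 'I_k -> R, (forall l, O l -> z l = y l) -> (forall l, z l < 1) ->
  P_simplex q z = C0 * (z i `^ q * (1 - z j1) `^ q * (1 - z j2) `^ q
     + z j1 `^ q * (1 - z i) `^ q * (1 - z j2) `^ q
     + z j2 `^ q * (1 - z i) `^ q * (1 - z j1) `^ q
     + S * ((1 - z i) `^ q * (1 - z j1) `^ q * (1 - z j2) `^ q)).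
  move=> z zO z1; rewrite Pprod // (prod3 _ h1 h2 h3) (sum3 _ h1 h2 h3).
  have -> : \prod_(l < k | O l) (1 - z l) `^ q = C0 by apply: eq_bigr => l hl; rewrite zO.
  have -> : \sum_(l < k | O l) (z l `^ q / (1 - z l) `^ q) = S by apply: eq_bigr => l hl; rewrite zO.
  have ne l : (1 - z l) `^ q != 0 by rewrite gt_eqF // powR_gt0 // subr_gt0.
  by field; rewrite ?ne.
pose z1 (t : R) := fun l : 'I_k => if l == i then a + t else if l == j1 then b - t else y l.
have z1O t l : O l -> z1 t l = y l.
  by rewrite /O /z1 => /andP[/andP[/negbTE -> /negbTE ->] _].
have z1i t : z1 t i = a + t by rewrite /z1 eqxx.
have z1j1 t : z1 t j1 = b - t by rewrite /z1 eq_sym (negbTE h1) eqxx.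
have z1j2 t : z1 t j2 = b by rewrite /z1 eq_sym (negbTE h2) eq_sym (negbTE h3) -yj2.
pose phi1 (t : R) := C0 * (pw q a 1 t * pw q (1 - b) 1 t * (1 - b) `^ q
   + pw q b (-1) t * pw q (1 - a) (-1) t * (1 - b) `^ q
   + b `^ q * pw q (1 - a) (-1) t * pw q (1 - b) 1 t
   + S * (pw q (1 - a) (-1) t * pw q (1 - b) 1 t * (1 - b) `^ q)).
have Py : P_simplex q y = phi1 0.
  rewrite decomp // /phi1 !pw0 yi yj1 yj2.
  by ring.
have phi1max t : - a < t < a -> phi1 t <= phi1 0.
  move=> /andP[ta1 ta2].
  have z1lt l : z1 t l < 1.
    rewrite /z1; case: (l == i); first lra.
    case: (l == j1); first lra.
    exact: ylt1.
  have -> : phi1 t = P_simplex q (z1 t).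
    rewrite (decomp _ (z1O t) z1lt) z1i z1j1 z1j2 /phi1 /pw !mul1r !mulN1r.
    have -> : 1 - (b - t) = 1 - b + t by ring.
    have -> : 1 - (a + t) = 1 - a + - t by ring.
    by ring.
  rewrite -Py; apply: ymax; split.
    move=> l; rewrite /z1; case: (l == i); first lra.
    case: (l == j1); first lra.
    exact: y0.
  rewrite (sum3 _ h1 h2 h3) z1i z1j1 z1j2.
  have -> : \sum_(l < k | O l) z1 t l = \sum_(l < k | O l) y l.
    by apply: eq_bigr => l; apply: z1O.
  lra.
evar (d1 : (R : Type)).
have D1 : isd phi1 0 d1.
  rewrite /phi1 /d1; dtac; rewrite ?mulr0 ?addr0 //.
have D1t t : - a < t < a -> derivable phi1 t 1.
  move=> ht; have [p1 p2 p3 p4 [p5 p6]] := posaux a0 ab b12 ht.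
  apply: isd_derivable; rewrite /phi1; dtac; done.
have FO : d1 = 0 by apply: (first_order a0 D1t D1 phi1max).
rewrite /d1 !pw0 !powq1 // in FO.
set L1 := (X in X = 0) in FO.
have X0 : 0 < (1 - a) * (1 - b + a) + al * a * (b - a).
  have p1 : 0 < (1 - a) * (1 - b + a) by apply: mulr_gt0 => //; apply: addr_gt0.
  have p2 : 0 <= al * a * (b - a).
    by apply: mulr_ge0; [apply: mulr_ge0 => //; exact: ltW | rewrite subr_ge0 ltW].
  lra.
have e1 : (a `^ q * (1 - b) `^ q * b - b `^ q * (1 - a) `^ q * a) *
   ((1 - a) * (1 - b + a) + al * a * (b - a)) =
   (a * b * (1 - a) * (1 - b)) / (q * C0 * (1 - b) `^ q) * L1.
  rewrite /L1 HS Hbe; field.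
  by rewrite !lt0r_neq0 //; lra.
rewrite FO mulr0 in e1.
have Arel : a `^ q * (1 - b) `^ q * b = b `^ q * (1 - a) `^ q * a.
  by apply/eqP; rewrite -subr_eq0; move/eqP: e1; rewrite mulf_eq0 (gt_eqF X0) orbF.
clear e1 FO L1 D1 D1t phi1max Py.
pose z2 (t : R) := fun l : 'I_k => if l == j1 then b + t else if l == j2 then b - t else y l.
have z2O t l : O l -> z2 t l = y l.
  by rewrite /O /z2 => /andP[/andP[_ /negbTE ->] /negbTE ->].
have z2i t : z2 t i = a by rewrite /z2 (negbTE h1) (negbTE h2).
have z2j1 t : z2 t j1 = b + t by rewrite /z2 eqxx.
have z2j2 t : z2 t j2 = b - t by rewrite /z2 eq_sym (negbTE h3) eqxx.
pose K1 := C0 * (a `^ q + S * (1 - a) `^ q).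
pose K2 := C0 * (1 - a) `^ q.
pose phi2 (t : R) := K1 * (pw q (1 - b) (-1) t * pw q (1 - b) 1 t)
   + K2 * (pw q b 1 t * pw q (1 - b) 1 t + pw q b (-1) t * pw q (1 - b) (-1) t).
have Py2 : P_simplex q y = phi2 0.
  rewrite decomp // /phi2 !pw0 yi yj1 yj2 /K1 /K2.
  by ring.
have phi2max t : - a < t < a -> phi2 t <= phi2 0.
  move=> /andP[ta1 ta2].
  have z2lt l : z2 t l < 1.
    rewrite /z2; case: (l == j1); first lra.
    case: (l == j2); first lra.
    exact: ylt1.
  have -> : phi2 t = P_simplex q (z2 t).
    rewrite (decomp _ (z2O t) z2lt) z2i z2j1 z2j2 /phi2 /K1 /K2 /pw !mul1r !mulN1r.
    have -> : 1 - (b - t) = 1 - b + t by ring.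
    have -> : 1 - (b + t) = 1 - b + - t by ring.
    by ring.
  rewrite -Py2; apply: ymax; split.
    move=> l; rewrite /z2; case: (l == j1); first lra.
    case: (l == j2); first lra.
    exact: y0.
  rewrite (sum3 _ h1 h2 h3) z2i z2j1 z2j2.
  have -> : \sum_(l < k | O l) z2 t l = \sum_(l < k | O l) y l.
    by apply: eq_bigr => l; apply: z2O.
  lra.
pose E (t : R) := K1 * (pw q (1 - b) (-1) t * (q * pw (q - 1) (1 - b) 1 t * 1)
     + pw q (1 - b) 1 t * (q * pw (q - 1) (1 - b) (-1) t * -1))
   + K2 * ((pw q b 1 t * (q * pw (q - 1) (1 - b) 1 t * 1) + pw q (1 - b) 1 t * (q * pw (q - 1) b 1 t * 1))
     + (pw q b (-1) t * (q * pw (q - 1) (1 - b) (-1) t * -1) + pw q (1 - b) (-1) t * (q * pw (q - 1) b (-1) t * -1))).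
have D2t t : - a < t < a -> isd phi2 t (E t).
  move=> ht; have [p1 p2 p3 p4 [p5 p6]] := posaux a0 ab b12 ht.
  apply: isd_eq.
    by rewrite /phi2; dtac.
  rewrite /E; ring.
evar (d2 : (R : Type)).
have DE : isd E 0 d2.
  rewrite /E /d2; dtac; rewrite ?mulr0 ?addr0 //.
have SO : d2 <= 0 by apply: (second_order a0 D2t DE phi2max).
rewrite /d2 !pw0 !powq1 // in SO.
set L2 := (X in X <= 0) in SO.
have pa_eq : a `^ q = b `^ q * (1 - a) `^ q * a / ((1 - b) `^ q * b).
  by rewrite -Arel; field; rewrite !lt0r_neq0.
have e2 : q - 1 + b = (b ^+ 2 * (1 - b) ^+ 2) /
     (2 * q * C0 * (1 - a) `^ q * b `^ q * (1 - b) `^ q) * L2.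
  rewrite /L2 /K1 /K2 HS Hbe pa_eq; field.
  by rewrite !lt0r_neq0 //; lra.
have : q - 1 + b <= 0.
  rewrite e2; apply: mulr_ge0_le0 => //.
  by apply: divr_ge0; [rewrite mulr_ge0 // exprn_ge0 // ltW | rewrite ltW // !mulr_gt0].
lra.
Qed.
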